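(* Let $G$ be a Tutte-Berge graph such that the induced subgraph of $G$ on $D(G)$ has no isolated vertices. Then $D(G)=\emptyset$ and $G$ has a perfect matching.
   Context: $\nu(G)$ is the matching number of $G$. For $U\subseteq V(G)$, $N_G(U)$ is the set of vertices adjacent to at least one vertex of $U$. $G$ is a Tutte-Berge graph if there exists an independent set $T$ of $G$ with $|T| = |N_G(T)| + |V(G)| - 2\nu(G)$. $D(G)$ is the set of vertices of $G$ left uncovered by at least one maximum matching of $G$. *)

(* Defs.v *)
(* A finite simple graph is a symmetric irreflexive relation
   e : rel T on a finite type T of vertices; V(G) = [set: T]. *)
From mathcomp Require Import all_boot all_order.
Set Implicit Arguments. Unset Strict Implicit. Unset Printing Implicit Defensive.

Section Graphs.
Variable T : finType.
Variable e : rel T.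

Definition simple_graph : Prop := symmetric e /\ irreflexive e.

Definition is_edge (E : {set T}) : bool :=
  [exists x, exists y, e x y && (E == [set x; y])].

Definition matching (M : {set {set T}}) : bool :=
  [forall E in M, is_edge E] && trivIset M.

Definition nu : nat := \max_(M : {set {set T}} | matching M) #|M|.

Definition max_matching (M : {set {set T}}) : bool :=
  matching M && (#|M| == nu).

Definition covered (M : {set {set T}}) : {set T} := cover M.

Definition perfect_matching (M : {set {set T}}) : bool :=
  matching M && (covered M == [set: T]).

Definition Dset : {set T} :=
  [set x | [exists M : {set {set T}}, max_matching M && (x \notin covered M)]].

Definition nbhd (U : {set T}) : {set T} := [set y | [exists x in U, e x y]].

Definition independent (U : {set T}) : bool :=
  [forall x in U, forall y in U, ~~ e x y].

(* Tutte-Berge graph: an independent T with |T| = |N(T)| + |V| - 2 nu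
   (stated without truncated subtraction) *)
Definition tutte_berge_graph : Prop :=
  exists U : {set T}, independent U /\
    (#|U| + 2 * nu = #|nbhd U| + #|T|)%N.

Definition D_no_isolated : Prop :=
  forall x, x \in Dset -> exists2 y, y \in Dset & e x y.

End Graphs.

(* Main.v *)
Require Import Defs.
From mathcomp Require Import all_boot all_order.
From mathcomp Require Import zify.

Section Aux.
Variable T : finType.
Variable e : rel T.
Hypothesis sg : simple_graph e.

Lemma cover_card (M : {set {set T}}) :
  matching e M -> #|cover M| = 2 * #|M|.
Proof.
case/andP=> /forallP He /eqP <-.
rewrite (eq_bigr (fun _ => 2)); first by rewrite sum_nat_const mulnC.
move=> E EM.
move: (He E); rewrite EM /= => /existsP [a /existsP [b /andP [eab /eqP ->]]].
rewrite cards2; case: eqP => // ab.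
by move: eab; rewrite ab (proj2 sg).
Qed.
Lemma key (U : {set T}) (M : {set {set T}}) x :
  independent e U -> (#|U| + 2 * nu e = #|nbhd e U| + #|T|)%N ->
  max_matching e M -> x \notin cover M -> x \in U.
Proof.
move=> indU hU /andP [mM /eqP cM] xC.
case: sg => sym irr.
pose p := fun u => odflt u [pick v | e u v && [exists E in M, (u \in E) && (v \in E)]].
have pP : forall u, u \in cover M -> e u (p u) && [exists E in M, (u \in E) && (p u \in E)].
  move=> u /bigcupP [E EM uE]; rewrite /p; case: pickP => [v // | none].
  move: mM => /andP [/forallP He _]; move: (He E); rewrite EM /=.
  move=> /existsP [a /existsP [b /andP [eab /eqP Eab]]].
  move: uE; rewrite Eab in_set2 => /orP [] /eqP ?; subst u.
  - move: (none b); rewrite eab /= => /negbT/negP; case; apply/exists_inP.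
    by exists E => //; rewrite Eab !in_set2 !eqxx orbT.
  - move: (none a); rewrite sym eab /= => /negbT/negP; case; apply/exists_inP.
    by exists E => //; rewrite Eab !in_set2 !eqxx orbT.
pose A := U :&: cover M.
have pinj : {in A &, injective p}.
  move=> u u'; rewrite !inE => /andP [_ uC] /andP [_ u'C] puu.
  move: (pP u uC) (pP u' u'C) => /andP [eu /exists_inP [E EM /andP [uE pE]]].
  move=> /andP [eu' /exists_inP [E' E'M /andP [u'E pE']]].
  have EE : E = E'.
    apply/eqP; apply: contraT => nE.
    move: mM => /andP [_ /trivIsetP tr].
    have := disjointFr (tr E E' EM E'M nE) pE.
    by rewrite puu pE'.
  subst E'.
  move: mM => /andP [/forallP He _]; move: (He E); rewrite EM /=.
  move=> /existsP [a /existsP [b /andP [eab /eqP Eab]]].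
  have nu1 : u != p u by apply: contraTneq eu => <-; rewrite irr.
  have nu2 : u' != p u by rewrite puu; apply: contraTneq eu' => <-; rewrite irr.
  move: uE u'E pE nu1 nu2; rewrite Eab !in_set2.
  case/orP=> /eqP ->; case/orP=> /eqP ->; case/orP=> /eqP -> //; by rewrite eqxx.
have sub : p @: A \subset nbhd e U.
  apply/subsetP=> v /imsetP [u uA ->]; rewrite inE; apply/exists_inP.
  move: uA; rewrite inE => /andP [uU uC]; exists u => //.
  by case/andP: (pP u uC).
have cA : #|A| <= #|nbhd e U| by rewrite -(card_in_imset pinj) subset_leq_card.
have cC := cover_card M mM.
have c1 := cardsC (cover M).
have c2 := cardsID (cover M) U.
have c3 : #|~: cover M| <= #|U :\: cover M|.
  rewrite /A in cA. lia.
have : U :\: cover M == ~: cover M.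
  by rewrite eqEcard c3 andbT; apply/subsetP => y; rewrite !inE => /andP [].
move/eqP=> eq; have : x \in ~: cover M by rewrite inE.
by rewrite -eq inE => /andP [].
Qed.
End Aux.

Theorem lemma2p9 (T : finType) (e : rel T) :
  simple_graph e -> tutte_berge_graph e -> D_no_isolated e ->
  Dset e = set0 /\ exists M : {set {set T}}, perfect_matching e M.
Proof.
move=> sg [U [indU hU]] noiso.
have DU : forall x, x \in Dset e -> x \in U.
  move=> x; rewrite inE => /existsP [M /andP [mM xC]].
  exact: (@key T e sg U M x indU hU mM xC).
have D0 : Dset e = set0.
  apply/setP=> x; rewrite [RHS]inE; apply/negP=> xD.
  case: (noiso x xD) => y yD exy.
  move/forallP: indU => /(_ x); rewrite DU //= => /forallP /(_ y).
  by rewrite DU //= exy.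
split=> //.
have m0 : (0 < #|[pred M : {set {set T}} | matching e M]|)%N.
  apply/card_gt0P; exists set0; rewrite inE /matching.
  apply/andP; split; first by apply/forall_inP => E; rewrite inE.
  by rewrite /trivIset big_set0 /cover big_set0 cards0.
case: (eq_bigmax_cond (fun M : {set {set T}} => #|M|) m0) => M mM eqM.
exists M; rewrite inE in mM; rewrite /perfect_matching mM /=.
apply/eqP/setP=> x; rewrite inE.
apply: contraT => xC.
have : x \in Dset e.
  unfold Dset; rewrite inE; apply/existsP; exists M; rewrite /max_matching mM (negbTE xC) /=.
  rewrite andbT; apply/eqP.
  rewrite -eqM /nu; apply: eq_bigl => i; by rewrite inE.
by rewrite D0 inE.
Qed.
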